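(* Let $t\in\mathbb C\setminus\{0,-1,-2,\dots\}$ and let $(m_{p,q})_{p,q\ge0}$ be complex numbers satisfying $$m_{p+1,q}+m_{p,q+1}-(p+q+1)m_{p,q}=m_{p,0}\,m_{0,q}\quad(p,q=0,1,2,\dots),\qquad m_{0,0}=t.$$ For a Young diagram $\lambda=(p_1,\dots,p_d\,|\,q_1,\dots,q_d)$ with $n=|\lambda|$ set $$\varphi(\lambda)=\frac{\det[m_{p_i,q_j}]_{i,j=1}^d}{t(t+1)\cdots(t+n-1)}$$ (with $\varphi(\varnothing)=1$). Then $\varphi$ is harmonic on the Young graph: $\varphi(\lambda)=\sum_{\nu:\ \nu\searrow\lambda}\varphi(\nu)$ for every Young diagram $\lambda$.
   Context: Frobenius notation: for a Young diagram $\lambda$, $d$ is the number of diagonal boxes, $p_i=\lambda_i-i$ and $q_i=\lambda'_i-i$ ($1\le i\le d$), where $\lambda'$ is the transposed diagram; $|\lambda|=\sum_i(p_i+q_i+1)$ is the number of boxes. $\nu\searrow\lambda$ means that $\nu$ is a Young diagram obtained from $\lambda$ by adding one box. *)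

(* Defs.v *)
(* Complex numbers are modelled as R[i] = complex R for an
   arbitrary R : realType (a model of the real numbers), i.e. C = R[i]. *)
From HB Require Import structures.
From mathcomp Require Import all_boot all_order all_algebra.
From mathcomp Require Import complex.
From mathcomp Require Import reals.
Set Implicit Arguments. Unset Strict Implicit. Unset Printing Implicit Defensive.
Import Order.TTheory GRing.Theory Num.Theory.

(* A Young diagram is represented by its row lengths lambda_1 >= lambda_2 >= ...
   > 0, as a seq nat (0-indexed: row i+1 is nth 0 s i). *)
Definition is_young (s : seq nat) : bool :=
  sorted (fun x y : nat => y <= x) s && all (fun x => 0 < x) s.

Definition ysize (s : seq nat) : nat := sumn s.

(* column lengths: lambda'_{j+1} = #{ k : lambda_k > j } *)
Definition yconj (s : seq nat) (j : nat) : nat := count (fun x => j < x) s.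

(* number of diagonal boxes d: #{ i >= 1 : lambda_i >= i } *)
Definition frob_d (s : seq nat) : nat :=
  count (fun i => i < nth 0 s i) (iota 0 (size s)).

(* Frobenius coordinates, 0-indexed: p_{i+1} = lambda_{i+1} - (i+1),
   q_{i+1} = lambda'_{i+1} - (i+1). *)
Definition frob_p (s : seq nat) (i : nat) : nat := (nth 0 s i - i.+1)%N.
Definition frob_q (s : seq nat) (i : nat) : nat := (yconj s i - i.+1)%N.

Definition adds_box (nu lam : seq nat) : Prop :=
  is_young nu /\ (forall i, (nth 0 lam i <= nth 0 nu i)%N) /\
  ysize nu = (ysize lam).+1.

Local Open Scope ring_scope.

Definition phi (R : realType) (t : R[i]) (m : nat -> nat -> R[i]) (lam : seq nat)
  : R[i] :=
  \det (\matrix_(i < frob_d lam, j < frob_d lam) m (frob_p lam i) (frob_q lam j))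
  / \prod_(k < ysize lam) (t + k%:R).

(* Main.v *)
Require Import Defs.
From HB Require Import structures.
From mathcomp Require Import all_boot all_order all_algebra.
From mathcomp Require Import complex.
From mathcomp Require Import reals.
From mathcomp Require Import zify ring.
Set Implicit Arguments. Unset Strict Implicit. Unset Printing Implicit Defensive.


Lemma count_dclosed (Q : pred nat) n :
  (forall k, Q k.+1 -> Q k) -> (forall k, Q k -> k < n) ->
  forall k, (k < count Q (iota 0 n)) = Q k.
Proof.
move=> Hd; elim: n => [|n IH] Hn k.
  by rewrite /=; apply/esym/negbTE/negP => /Hn.
rewrite -[n.+1]addn1 iotaD count_cat /= add0n addn0.
case Qn: (Q n).
- have Hx : forall x, Q (n - x).
    elim=> [|x IHx]; first by rewrite subn0.
    have [E|E] : n - x = (n - x.+1).+1 \/ n - x.+1 = n - x by lia.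
    + by apply: Hd; rewrite -E.
    + by rewrite E.
  have Hall : forall k, k <= n -> Q k.
    by move=> k' hk; have := Hx (n - k'); rewrite subKn.
  have -> : count Q (iota 0 n) = n.
    rewrite (@eq_in_count _ _ predT) ?count_predT ?size_iota //.
    by move=> x; rewrite mem_iota add0n => /andP [_ h]; apply: Hall; apply: ltnW.
  rewrite addn1 ltnS; apply/idP/idP => [/Hall //|/Hn]; by rewrite ltnS.
- have Hn' : forall k, Q k -> k < n.
    move=> k' Qk; have := Hn _ Qk; rewrite ltnS leq_eqVlt => /orP [/eqP E|//].
    by rewrite E Qn in Qk.
  by rewrite addn0 IH.
Qed.

Lemma eq_from_lt x y : (forall k, (k < x) = (k < y)) -> x = y.
Proof.
move=> H; apply/eqP; rewrite eqn_leq; apply/andP; split.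
  by rewrite leqNgt (H y) ltnn.
by rewrite leqNgt -(H x) ltnn.
Qed.

Definition NIs (s : seq nat) := forall k, nth 0 s k.+1 <= nth 0 s k.

Lemma NI_mono s : NIs s -> forall i j, i <= j -> nth 0 s j <= nth 0 s i.
Proof.
move=> H i j /subnKC <-; elim: (j - i) => [|x IH]; first by rewrite addn0.
by rewrite addnS (leq_trans (H _)).
Qed.

Lemma nth_pos_size s k : 0 < nth 0 s k -> k < size s.
Proof. by apply: contraTT; rewrite -leqNgt => /(nth_default 0) ->. Qed.

Lemma yconjP s : NIs s -> forall j k, (k < yconj s j) = (j < nth 0 s k).
Proof.
move=> H j k; rewrite /yconj -{1}(mkseq_nth 0 s) /mkseq count_map.
apply: (count_dclosed (Q := fun k => j < nth 0 s k)) => [k' /= h|k' /= h].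
  exact: leq_trans h (H _).
by apply: nth_pos_size; apply: leq_ltn_trans h.
Qed.

Lemma frob_dP s : NIs s -> forall k, (k < frob_d s) = (k < nth 0 s k).
Proof.
move=> H k; rewrite /frob_d.
apply: (count_dclosed (Q := fun k => k < nth 0 s k)) => [k' /= h|k' /= h].
  exact: leq_trans (ltnW h) (H _).
by apply: nth_pos_size; apply: leq_ltn_trans h.
Qed.

Lemma young_NI s : is_young s -> NIs s.
Proof.
case/andP => /sortedP Hs _ k.
case: (ltnP k.+1 (size s)) => h; first exact: (Hs 0 k h).
by rewrite (nth_default 0 h).
Qed.

Lemma young_size s : is_young s -> forall k, (k < size s) = (0 < nth 0 s k).
Proof.
case/andP => _ /(all_nthP 0) Hp k; apply/idP/idP; last exact: nth_pos_size.
exact: Hp.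
Qed.

Definition valid_row (s : seq nat) i := (i == 0) || (nth 0 s i < nth 0 s i.-1).

Lemma young_incr s i : is_young s -> i <= size s -> valid_row s i ->
  is_young (incr_nth s i).
Proof.
move=> Y hi hv; have NI := young_NI Y; have Hs := young_size Y.
apply/andP; split.
  apply/(sortedP 0) => k hk; rewrite !nth_incr_nth.
  case: (i =P k.+1) => [E|_].
    by subst i; move: hv; rewrite /valid_row /=; lia.
  by rewrite add0n; apply: leq_trans (NI k) _; apply: leq_addl.
apply/(all_nthP 0) => k hk; rewrite nth_incr_nth.
case: (i =P k) => [_|ne]; first by [].
rewrite add0n -Hs.
move: hk; rewrite size_incr_nth; case: (ltnP i (size s)) => hs hk //; lia.
Qed.

Lemma incr_valid s i : is_young (incr_nth s i) -> valid_row s i.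
Proof.
move=> /young_NI H; rewrite /valid_row; case: i H => [//|i] H /=.
have := H i; rewrite !nth_incr_nth eqxx /= (_ : (i.+1 == i) = false); last lia.
by rewrite add1n add0n.
Qed.

Lemma sumn_nth s N : size s <= N -> sumn s = \sum_(k < N) nth 0 s k.
Proof.
elim: s N => [|x s IH] N h.
  by rewrite big1 // => k _; rewrite nth_nil.
case: N h => [//|N] h.
by rewrite big_ord_recl /= (IH N h).
Qed.

Lemma sumn_incr s i : i <= size s -> sumn (incr_nth s i) = (sumn s).+1.
Proof.
move=> hi.
have hsz : size (incr_nth s i) <= (size s).+1 by rewrite size_incr_nth; case: ltnP => // _; rewrite ltnS.
rewrite (sumn_nth hsz) (@sumn_nth s (size s).+1) // .
have h1 : \sum_(k < (size s).+1) (i == k) = 1.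
  rewrite (bigD1 (Ordinal (hi : i < (size s).+1))) //= eqxx big1 // => k hk.
  by rewrite (_ : (i == k) = false) //; apply/negbTE; move: hk; rewrite -val_eqE /= eq_sym.
under eq_bigr do rewrite nth_incr_nth.
by rewrite big_split /= h1 add1n.
Qed.

Definition Ssucc (s : seq nat) :=
  [seq incr_nth s i | i <- iota 0 (size s).+1 & valid_row s i].

Lemma adds_box_incr s nu : is_young s -> adds_box nu s ->
  exists2 i, i <= size s & nu = incr_nth s i.
Proof.
move=> Ys [Ynu [Hge Hsum]].
set N := size nu + size s.
have hN1 : size nu <= N by apply: leq_addr.
have hN2 : size s <= N by apply: leq_addl.
pose e k := nth 0 nu k - nth 0 s k.
have He : \sum_(k < N) e k = 1.
  have := Hsum; rewrite /ysize (sumn_nth hN1) (sumn_nth hN2).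
  have -> : \sum_(k < N) nth 0 nu k = \sum_(k < N) (nth 0 s k + e k).
    by apply: eq_bigr => k _; rewrite /e subnKC.
  rewrite big_split /= -addn1 => /eqP; rewrite eqn_add2l => /eqP //.
have [k hk] : exists k : 'I_N, 0 < e k.
  apply/existsP; apply: contraT; rewrite negb_exists => /forallP H.
  move: He; rewrite big1 // => k _; apply/eqP; rewrite -leqn0 leqNgt; exact: H.
have Hek : e k = 1 /\ forall j : 'I_N, j != k -> e j = 0.
  move: He; rewrite (bigD1 k) //= => He.
  have h0 : \sum_(j < N | j != k) e j = 0.
    move: He hk; set S := \sum_(_ < N | _) _; set x := e k; lia.
  split; first by move: He; rewrite h0 addn0.
  move=> j hj; move/eqP: h0; rewrite sum_nat_eq0 => /forall_inP H.
  by apply/eqP; apply: H.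
have Hnth : forall j, nth 0 nu j = (k == j :> nat) + nth 0 s j.
  move=> j; case: (ltnP j N) => hj.
  - case: (k =P Ordinal hj :> 'I_N) => [E|ne].
      subst k; rewrite /= eqxx; case: Hek => h _; move: h; rewrite /e /=; have := Hge j; lia.
    have := (proj2 Hek) (Ordinal hj); rewrite eq_sym (introF eqP ne) => /(_ isT).
    rewrite /e (_ : (k == j :> nat) = false); last first.
      by apply/negbTE/eqP => E; apply: ne; apply: val_inj.
    have := Hge j; rewrite /=; lia.
  - rewrite !nth_default ?(leq_trans hN1) ?(leq_trans hN2) //.
    by rewrite (_ : (k == j :> nat) = false) //; apply/negbTE; have := ltn_ord k; lia.
have Yn := young_size Ynu; have Ys' := young_size Ys.
have hk' : (k : nat) <= size s.
  rewrite leqNgt; apply/negP => hlt.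
  have h1 : (k : nat) < size nu by rewrite Yn Hnth eqxx.
  have h2 : size s < size nu by apply: ltn_trans h1.
  move: h2; rewrite Yn Hnth (_ : (k == size s :> nat) = false) /= ?nth_default //.
  by apply/negbTE; lia.
exists (k : nat) => //.
have Hsz : size nu = size (incr_nth s k).
  apply: eq_from_lt => j; rewrite Yn Hnth size_incr_nth.
  case: (ltnP k (size s)) => hks.
    rewrite Ys'; case: eqP => [<-|_]; last by [].
    by rewrite add1n -Ys' hks.
  have Ek : (k : nat) = size s by apply/eqP; rewrite eqn_leq hk' hks.
  rewrite Ek; case: eqP => [<-|ne]; first by rewrite add1n ltnSn.
  rewrite add0n -Ys'; lia.
apply: (eq_from_nth (x0 := 0)) => // j _; by rewrite Hnth nth_incr_nth.
Qed.

Lemma mem_Ssucc s nu : is_young s -> (nu \in Ssucc s) <-> adds_box nu s.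
Proof.
move=> Ys; split.
  case/mapP => i; rewrite mem_filter mem_iota add0n ltnS => /andP [hv hi] ->.
  split; first exact: young_incr.
  split; first by move=> k; rewrite nth_incr_nth leq_addl.
  exact: sumn_incr.
move=> H; have [i hi E] := adds_box_incr Ys H.
apply/mapP; exists i => //; rewrite mem_filter mem_iota add0n ltnS hi leq0n andbT.
rewrite andbT; apply: incr_valid; rewrite -E; by case: H.
Qed.

Lemma sum_succ (R : Type) (idx : R) (op : Monoid.com_law idx) (F : seq nat -> R)
  s (succ : seq (seq nat)) : is_young s -> uniq succ ->
  (forall nu, nu \in succ <-> adds_box nu s) ->
  \big[op/idx]_(nu <- succ) F nu =
  \big[op/idx]_(i < (size s).+1 | valid_row s i) F (incr_nth s i).
Proof.
move=> Ys U H.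
have P : perm_eq succ (Ssucc s).
  apply: uniq_perm => //.
    by rewrite map_inj_uniq ?filter_uniq ?iota_uniq //; apply: incr_nth_inj.
  move=> nu; apply/idP/idP => h.
    by apply/(mem_Ssucc _ Ys); apply/H.
  by apply/H; apply/(mem_Ssucc _ Ys).
rewrite (perm_big _ P) /Ssucc big_map big_filter -(big_mkord (fun i => valid_row s i) (fun i => F (incr_nth s i))).
by rewrite /index_iota subn0.
Qed.


Section Frob.
Variable s : seq nat.
Hypothesis Ys : is_young s.
Local Notation l := (nth 0 s).
Local Notation d := (frob_d s).
Local Notation r := (size s).

Let NI := young_NI Ys.
Let mono := NI_mono NI.
Let L1 : forall k, (k < d) = (k < l k) := frob_dP NI.
Let LY : forall j k, (k < yconj s j) = (j < l k) := yconjP NI.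

Lemma d_size : d <= r.
Proof.
rewrite leqNgt; apply/negP => h; move: (h); rewrite L1 nth_default //.
Qed.

Lemma l_ge k : k < d -> d <= l k.
Proof.
move=> hk; have h1 : d.-1 < l d.-1 by rewrite -L1; lia.
have h2 : k <= d.-1 by lia.
have := mono h2; lia.
Qed.

Lemma y_ge k : k < d -> d <= yconj s k.
Proof.
move=> hk; have h1 := l_ge (k := d.-1) ltac:(lia).
have : d.-1 < yconj s k by rewrite LY; lia.
lia.
Qed.

Lemma l_d : l d <= d.
Proof. by rewrite leqNgt -L1 ltnn. Qed.

Lemma l_gt i : d <= i -> l i <= d.
Proof. by move=> h; apply: leq_trans (mono h) l_d. Qed.

Lemma y_size j : yconj s j <= r.
Proof. exact: count_size. Qed.

Lemma valid_prev i : valid_row s i -> 0 < i -> l i < l i.-1.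
Proof. by rewrite /valid_row; case: i. Qed.

Lemma y_valid i : valid_row s i -> yconj s (l i) = i.
Proof.
move=> hv; apply: eq_from_lt => k; rewrite LY.
case: (ltnP k i) => hk.
  have h1 := valid_prev hv ltac:(lia).
  have := mono (_ : k <= i.-1); lia.
by apply/negbTE; rewrite -leqNgt; apply: mono.
Qed.

Section Row.
Variable i : nat.
Hypothesis hi : i < d.
Hypothesis hv : valid_row s i.
Let nu := incr_nth s i.
Let Ynu : is_young nu := young_incr Ys (leq_trans (ltnW hi) d_size) hv.
Let NInu := young_NI Ynu.

Lemma row_d : frob_d nu = d.
Proof.
apply: eq_from_lt => k; rewrite (frob_dP NInu) L1 nth_incr_nth.
case: eqP => [<-|_]; last by [].
have := L1 i; rewrite hi => h; lia.
Qed.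

Lemma row_p k : k < d -> frob_p nu k = frob_p s k + (k == i).
Proof.
move=> hk; rewrite /frob_p nth_incr_nth eq_sym; have := L1 k; rewrite hk; lia.
Qed.

Lemma row_q j : j < d -> frob_q nu j = frob_q s j.
Proof.
move=> hj; rewrite /frob_q; congr (_ - _); apply: eq_from_lt => k.
rewrite (yconjP NInu) LY nth_incr_nth; case: eqP => [<-|_]; last by [].
have := l_ge hi; lia.
Qed.
End Row.

Lemma row_invalid i : i < d -> ~~ valid_row s i ->
  frob_p s i.-1 = frob_p s i + 1.
Proof.
move=> hi; rewrite /valid_row negb_or => /andP [hi0 hl].
have := NI i.-1; rewrite prednK; last lia.
have := L1 i; rewrite hi /frob_p; lia.
Qed.

Section Col.
Variable i : nat.
Hypothesis hi : d <= i.
Hypothesis hir : i <= r.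
Hypothesis hv : valid_row s i.
Hypothesis hl : l i < d.
Let nu := incr_nth s i.
Let Ynu : is_young nu := young_incr Ys hir hv.
Let NInu := young_NI Ynu.

Lemma col_d : frob_d nu = d.
Proof.
apply: eq_from_lt => k; rewrite (frob_dP NInu) L1 nth_incr_nth.
case: eqP => [<-|_]; last by [].
lia.
Qed.

Lemma col_p k : k < d -> frob_p nu k = frob_p s k.
Proof.
move=> hk; rewrite /frob_p nth_incr_nth (_ : (i == k) = false) //; lia.
Qed.

Lemma col_q k : k < d -> frob_q nu k = frob_q s k + (k == l i).
Proof.
move=> hk; rewrite /frob_q.
case: (k =P l i) => [E|ne].
  have -> : yconj nu k = i.+1.
    apply: eq_from_lt => k'; rewrite (yconjP NInu) nth_incr_nth E.
    case: (i =P k') => [<-|ne']; first by rewrite add1n ltnSn ltnS leqnn.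
    rewrite add0n -LY y_valid //; lia.
  rewrite E y_valid //; lia.
rewrite addn0; congr (_ - _); apply: eq_from_lt => k'.
rewrite (yconjP NInu) LY nth_incr_nth; case: eqP => [<-|_]; last by [].
lia.
Qed.
End Col.

Section Diag.
Variable i : nat.
Hypothesis hi : d <= i.
Hypothesis hir : i <= r.
Hypothesis hv : valid_row s i.
Hypothesis hl : l i = d.
Let nu := incr_nth s i.
Let Ynu : is_young nu := young_incr Ys hir hv.
Let NInu := young_NI Ynu.

Lemma diag_i : i = d.
Proof.
apply/eqP; rewrite eqn_leq hi andbT leqNgt; apply/negP => h.
have h1 := valid_prev hv ltac:(lia).
have := l_gt (_ : d <= i.-1); lia.
Qed.

Lemma diag_ld : l d = d.
Proof. by have := hl; rewrite diag_i. Qed.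

Lemma diag_d : frob_d nu = d.+1.
Proof.
apply: eq_from_lt => k; rewrite (frob_dP NInu) nth_incr_nth diag_i.
case: (d =P k) => [<-|ne]; first by rewrite diag_ld ltnSn; apply/idP; lia.
rewrite add0n -L1; apply/idP/idP; lia.
Qed.

Lemma diag_p k : k < d.+1 -> frob_p nu k = if k < d then frob_p s k else 0.
Proof.
move=> hk; rewrite /frob_p nth_incr_nth diag_i.
case: (ltnP k d) => h; first by rewrite (_ : (d == k) = false) //; lia.
have -> : k = d by lia.
rewrite eqxx diag_ld; lia.
Qed.

Lemma diag_q k : k < d.+1 -> frob_q nu k = if k < d then frob_q s k else 0.
Proof.
move=> hk; rewrite /frob_q.
case: (ltnP k d) => h.
  congr (_ - _); apply: eq_from_lt => k'.
  rewrite (yconjP NInu) LY nth_incr_nth diag_i; case: eqP => [<-|_]; last by [].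
  by rewrite diag_ld; apply/idP/idP; lia.
have Ek : k = d by lia.
have -> : yconj nu k = d.+1.
  apply: eq_from_lt => k'; rewrite (yconjP NInu) nth_incr_nth diag_i Ek.
  case: (d =P k') => [<-|ne]; first by rewrite diag_ld ltnSn; apply/idP; lia.
  rewrite add0n.
  case: (ltnP k' d) => hk'.
    have h1 := valid_prev hv (_ : 0 < i); rewrite diag_i in h1.
    have h2 := mono (_ : k' <= d.-1).
    have := h1 ltac:(lia); have := h2 ltac:(lia); rewrite diag_ld => *; apply/idP/idP; lia.
  have := mono hk'; rewrite diag_ld => *; apply/idP/idP; lia.
lia.
Qed.
End Diag.

End Frob.


Section AlgS.
Import Order.TTheory GRing.Theory Num.Theory.
Local Open Scope ring_scope.
Variable K : comNzRingType.

Lemma Lrow d (M X : 'M[K]_d) :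
  \sum_(i < d) \det (\matrix_(r, c) if r == i then X r c else M r c)
  = \sum_(i < d) \sum_(j < d) X i j * cofactor M i j.
Proof.
apply: eq_bigr => i _; rewrite (expand_det_row _ i); apply: eq_bigr => j _.
rewrite mxE eqxx; congr (_ * _); rewrite /cofactor; congr (_ * \det _).
apply/matrixP => r c; rewrite !mxE; have /negbTE -> : lift i r != i by rewrite eq_sym neq_lift. by [].
Qed.

Lemma Lcol d (M Y : 'M[K]_d) :
  \sum_(j < d) \det (\matrix_(r, c) if c == j then Y r c else M r c)
  = \sum_(i < d) \sum_(j < d) Y i j * cofactor M i j.
Proof.
rewrite [RHS]exchange_big; apply: eq_bigr => j _; rewrite (expand_det_col _ j); apply: eq_bigr => i _.
rewrite mxE eqxx; congr (_ * _); rewrite /cofactor; congr (_ * \det _).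
apply/matrixP => r c; rewrite !mxE; have /negbTE -> : lift j c != j by rewrite eq_sym neq_lift. by [].
Qed.

Lemma Lsum d (M : 'M[K]_d) (u v : 'I_d -> K) :
  \sum_(i < d) \sum_(j < d) (u i + v j + 1) * M i j * cofactor M i j
  = (\sum_(i < d) u i + \sum_(j < d) v j + d%:R) * \det M.
Proof.
rewrite !mulrDl.
transitivity (\sum_(i < d) \sum_(j < d) u i * (M i j * cofactor M i j) +
   \sum_(i < d) \sum_(j < d) v j * (M i j * cofactor M i j) +
   \sum_(i < d) \sum_(j < d) (M i j * cofactor M i j)).
  rewrite -!big_split /=.
  apply: eq_bigr => i _; rewrite -!big_split /=; apply: eq_bigr => j _.
  by rewrite !mulrDl !mul1r !mulrA.
rewrite !big_distrl /=; congr (_ + _ + _).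
- by apply: eq_bigr => i _; rewrite -big_distrr /= -expand_det_row.
- rewrite exchange_big; apply: eq_bigr => j _; rewrite -big_distrr /= -expand_det_col //.
- have -> : (d%:R : K) = \sum_(i < d) (1 : K) by rewrite sumr_const card_ord.
  rewrite big_distrl /=.
  by apply: eq_bigr => i _; rewrite mul1r -expand_det_row.
Qed.

Lemma sign_aux (a b c : nat) : (-1) ^+ (a + c.+1) * (-1) ^+ (c + b) = - (-1) ^+ (a + b) :> K.
Proof.
rewrite !exprD exprS mulN1r.
have h : (-1) ^+ c * (-1) ^+ c = 1 :> K by rewrite -exprD addnn -muln2 exprM sqrr_sign.
rewrite mulrN mulNr; congr (- _).
by rewrite mulrA -(mulrA _ _ ((-1) ^+ c)) h mulr1.
Qed.

Lemma liftmaxE n (i : 'I_n) : (lift ord_max i : nat) = i.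
Proof. by rewrite /= /bump leqNgt ltn_ord. Qed.

Lemma bumpE n (i : 'I_n) : bump n i = i.
Proof. by rewrite /bump leqNgt ltn_ord. Qed.

Lemma Lbord d (M : 'M[K]_d) (B : 'M[K]_d.+1) (a b : 'I_d -> K) t :
  (forall i j, B (lift ord_max i) (lift ord_max j) = M i j) ->
  (forall i, B (lift ord_max i) ord_max = a i) ->
  (forall j, B ord_max (lift ord_max j) = b j) ->
  B ord_max ord_max = t ->
  \det B = t * \det M - \sum_(i < d) \sum_(j < d) a i * b j * cofactor M i j.
Proof.
move=> HM Ha Hb Ht.
rewrite (expand_det_col _ ord_max) big_ord_recr /= addrC; congr (_ + _).
  rewrite Ht /cofactor addnn -muln2 exprM sqrr_sign mul1r.
  congr (_ * \det _); apply/matrixP => r c; rewrite !mxE; exact: HM.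
rewrite -sumrN.
have Ew : forall i : 'I_d, widen_ord (leqnSn d) i = lift ord_max i.
  by move=> i; apply: val_inj; rewrite /= /bump leqNgt ltn_ord.
apply: eq_bigr => i _; rewrite Ew Ha /cofactor.
move: M B a b i HM Ha Hb Ht Ew; case: d => [|d] M B a b i; first by case: i.
move=> HM Ha Hb _ _.
rewrite (expand_det_row _ ord_max) big_distrr /= -sumrN big_distrr /=.
apply: eq_bigr => k _; rewrite !mxE.
have -> : lift (lift ord_max i) ord_max = ord_max.
  apply: val_inj; rewrite /= /bump (leqNgt d.+1 i) ltn_ord /=.
  by rewrite add0n -ltnS ltn_ord.
rewrite Hb /cofactor.
have -> : row' ord_max (col' k (row' (lift ord_max i) (col' ord_max B))) = row' i (col' k M).
  apply/matrixP => r c; rewrite !mxE -HM; congr (B _ _).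
  apply: val_inj; rewrite /= ?bumpE.
  have h : (bump i r <= d)%N.
    apply: leq_trans (_ : (1 + r <= d)%N); [by rewrite leq_add2r leq_b1 | by rewrite add1n ltn_ord].
  by rewrite [in RHS]/bump leqNgt ltnS h.
rewrite bumpE -[(-1) ^+ (i + k)]opprK -(sign_aux i k d).
change (nat_of_ord (@ord_max d)) with d.
ring.
Qed.

Definition Fdet (m : nat -> nat -> K) d (P Q : nat -> nat) :=
  \det (\matrix_(i < d, j < d) m (P i) (Q j)).

Lemma ALG (m : nat -> nat -> K)
  (hrec : forall p q : nat,
     m p.+1 q + m p q.+1 - (p + q + 1)%:R * m p q = m p 0%N * m 0%N q)
  d (P Q : nat -> nat) :
  \sum_(i < d) Fdet m d (fun k => (P k + (k == i))%N) Q
  + \sum_(j < d) Fdet m d P (fun k => (Q k + (k == j))%N)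
  + Fdet m d.+1 (fun k => if (k < d)%N then P k else 0%N) (fun k => if (k < d)%N then Q k else 0%N)
  = (m 0 0 + (\sum_(i < d) (P i + Q i + 1))%N%:R) * Fdet m d P Q.
Proof.
set M := \matrix_(i < d, j < d) m (P i) (Q j).
pose X := \matrix_(i < d, j < d) m (P i).+1 (Q j).
pose Y := \matrix_(i < d, j < d) m (P i) (Q j).+1.
have E1 : \sum_(i < d) Fdet m d (fun k => (P k + (k == i))%N) Q
   = \sum_(i < d) \det (\matrix_(r, c) if r == i then X r c else M r c).
  apply: eq_bigr => i _; rewrite /Fdet; congr (\det _); apply/matrixP => r c.
  rewrite !mxE; case: (r =P i) => [->|/eqP hne]; first by rewrite eqxx /= addn1.
  by move: hne; rewrite -val_eqE /= => /negbTE ->; rewrite addn0.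
have E2 : \sum_(j < d) Fdet m d P (fun k => (Q k + (k == j))%N)
   = \sum_(j < d) \det (\matrix_(r, c) if c == j then Y r c else M r c).
  apply: eq_bigr => j _; rewrite /Fdet; congr (\det _); apply/matrixP => r c.
  rewrite !mxE; case: (c =P j) => [->|/eqP hne]; first by rewrite eqxx /= addn1.
  by move: hne; rewrite -val_eqE /= => /negbTE ->; rewrite addn0.
rewrite E1 E2 Lrow Lcol.
rewrite /Fdet (@Lbord d M _ (fun i => m (P i) 0%N) (fun j => m 0%N (Q j)) (m 0%N 0%N)); last first.
- by rewrite mxE /= ltnn.
- by move=> j; rewrite mxE /= ltnn bumpE ltn_ord.
- by move=> i; rewrite mxE /= ltnn bumpE ltn_ord.
- by move=> i j; rewrite !mxE /= !bumpE !ltn_ord.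
rewrite -/M.
have L := Lsum M (fun i => (P i)%:R) (fun j => (Q j)%:R).
have E3 : (\sum_(i < d) (P i + Q i + 1))%N%:R
   = \sum_(i < d) (P i)%:R + \sum_(j < d) (Q j)%:R + d%:R :> K.
  rewrite natr_sum -[d%:R]mulr1 -[d in d%:R](card_ord d) -sumr_const mulr1 -!big_split /=.
  by apply: eq_bigr => i _; rewrite !natrD.
rewrite mulrDl E3 -L.
have E4 : \sum_(i < d) \sum_(j < d) X i j * cofactor M i j
   + \sum_(i < d) \sum_(j < d) Y i j * cofactor M i j
   - \sum_(i < d) \sum_(j < d) (m (P i) 0%N * m 0%N (Q j)) * cofactor M i j
   = \sum_(i < d) \sum_(j < d) ((P i)%:R + (Q j)%:R + 1) * M i j * cofactor M i j.
  rewrite -big_split -sumrB; apply: eq_bigr => i _.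
  rewrite -big_split -sumrB; apply: eq_bigr => j _.
  rewrite !mxE -hrec !natrD /=; ring.
rewrite -E4; ring.
Qed.

Lemma Fdet_ext (m : nat -> nat -> K) d P Q P' Q' :
  (forall i, (i < d)%N -> P i = P' i) -> (forall j, (j < d)%N -> Q j = Q' j) ->
  Fdet m d P Q = Fdet m d P' Q'.
Proof.
move=> HP HQ; rewrite /Fdet; congr (\det _); apply/matrixP => i j.
by rewrite !mxE HP ?HQ.
Qed.

Lemma Fdet_row0 (m : nat -> nat -> K) d P Q i1 i2 :
  (i1 < d)%N -> (i2 < d)%N -> i1 != i2 -> P i1 = P i2 -> Fdet m d P Q = 0.
Proof.
move=> h1 h2 ne E; rewrite /Fdet.
apply: (@determinant_alternate _ _ _ (Ordinal h1) (Ordinal h2)) => [|j].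
  by rewrite -val_eqE.
by rewrite !mxE /= E.
Qed.

Lemma Fdet_col0 (m : nat -> nat -> K) d P Q j1 j2 :
  (j1 < d)%N -> (j2 < d)%N -> j1 != j2 -> Q j1 = Q j2 -> Fdet m d P Q = 0.
Proof.
move=> h1 h2 ne E; rewrite /Fdet -det_tr.
apply: (@determinant_alternate _ _ _ (Ordinal h1) (Ordinal h2)) => [|j].
  by rewrite -val_eqE.
by rewrite !mxE /= E.
Qed.

End AlgS.


Section Z.
Variable s : seq nat.
Hypothesis Ys : is_young s.
Local Notation l := (nth 0 s).
Local Notation d := (frob_d s).
Local Notation r := (size s).

Let NI := young_NI Ys.
Let mono := NI_mono NI.
Let L1 : forall k, (k < d) = (k < l k) := frob_dP NI.
Let LY : forall j k, (k < yconj s j) = (j < l k) := yconjP NI.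

Lemma col_zero_aux j : j < d -> l (yconj s j) != j ->
  0 < j /\ frob_q s j.-1 = frob_q s j + 1.
Proof.
move=> hj; set i0 := yconj s j; move/eqP => hne.
have h1 : l i0 <= j by rewrite leqNgt -LY ltnn.
have hj0 : 0 < j by lia.
split => //.
have hi0 := y_ge Ys hj.
have E : yconj s j.-1 = i0.
  apply: eq_from_lt => k; rewrite !LY.
  case: (ltnP k i0) => hk.
    have : j < l k by rewrite -LY.
    lia.
  have := mono hk; lia.
rewrite /frob_q E prednK //; lia.
Qed.

Lemma col_zero (K : comNzRingType) (m : nat -> nat -> K) j : j < d ->
  l (yconj s j) != j ->
  Fdet m d (frob_p s) (fun k => (frob_q s k + (k == j))%N) = 0%R.
Proof.
move=> hj hne; have [hj0 E] := col_zero_aux hj hne.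
apply: (@Fdet_col0 _ m d _ _ j.-1 j) => //.
- lia.
- lia.
- rewrite E eqxx (_ : (j.-1 == j) = false) //; lia.
Qed.

Lemma d0_cond : d = 0 ->
  [&& valid_row s (yconj s d), d <= yconj s d & l (yconj s d) == d].
Proof.
move=> hd; have h := l_d Ys; rewrite hd in h.
have hr : r = 0.
  apply/eqP; rewrite -leqn0 leqNgt (young_size Ys); lia.
have -> : yconj s d = 0.
  apply: eq_from_lt => k; rewrite LY hd -(young_size Ys) hr //.
rewrite hd /valid_row /=; apply/eqP; lia.
Qed.

Lemma diag_zero (K : comNzRingType) (m : nat -> nat -> K) :
  ~~ [&& valid_row s (yconj s d), d <= yconj s d & l (yconj s d) == d] ->
  Fdet m d.+1 (fun k => if (k < d)%N then frob_p s k else 0%N)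
              (fun k => if (k < d)%N then frob_q s k else 0%N) = 0%R.
Proof.
move=> H.
case: (posnP d) => hd0; first by move: H; rewrite d0_cond.
have hld1 : d <= l d.-1 by apply: (l_ge Ys); lia.
case: (ltnP d (l d.-1)) => h1; last first.
  apply: (@Fdet_row0 _ m d.+1 _ _ d.-1 d) => //; try lia.
  rewrite ltnn (_ : d.-1 < d) /frob_p; lia.
have hyd1 : d <= yconj s d.-1 by apply: (y_ge Ys); lia.
case: (ltnP d (yconj s d.-1)) => h2; last first.
  apply: (@Fdet_col0 _ m d.+1 _ _ d.-1 d) => //; try lia.
  rewrite ltnn (_ : d.-1 < d) /frob_q; lia.
have hld : l d = d.
  have := h2; rewrite LY => h3; have := l_d Ys; lia.
have Ey : yconj s d = d.
  apply: eq_from_lt => k; rewrite LY.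
  case: (ltnP k d) => hk.
    have := mono (_ : k <= d.-1); lia.
  have := mono hk; lia.
move: H; rewrite Ey hld eqxx leqnn /valid_row.
rewrite (_ : (d == 0) = false); last lia.
by rewrite /= hld h1.
Qed.

Lemma ord_count_gen (a b N : nat) :
  \sum_(x < N) ((a <= x) && (x < b)) = minn N b - a.
Proof.
elim: N => [|N IH]; first by rewrite big_ord0; lia.
rewrite big_ord_recr /= IH.
case: (leqP a N) => h1; case: (ltnP N b) => h2 /=; lia.
Qed.

Lemma ord_count (a b N : nat) : b <= N ->
  \sum_(x < N) ((a <= x) && (x < b)) = b - a.
Proof. by move=> h; rewrite ord_count_gen; congr (_ - _); lia. Qed.

Lemma sum_trunc N e (f : nat -> nat) : e <= N -> (forall k, e <= k -> f k = 0) ->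
  \sum_(k < N) f k = \sum_(k < e) f k.
Proof.
move=> hN hf; rewrite (big_ord_widen N f hN) (bigID (fun k : 'I_N => k < e)) /=.
by rewrite [X in _ + X]big1 ?addn0 // => k; rewrite -leqNgt => /hf.
Qed.

Lemma size_frob : sumn s = \sum_(i < d) (frob_p s i + frob_q s i + 1).
Proof.
set N := r + l 0.
have hl0 : forall k, l k <= N by move=> k; apply: leq_trans (mono (leq0n k)) (leq_addl _ _).
have hrN : r <= N by apply: leq_addr.
have hdN : d <= N by apply: leq_trans (d_size Ys) hrN.
rewrite (sumn_nth hrN).
have E1 : \sum_(k < N) l k = \sum_(k < N) \sum_(c < N) ((k <= c) && (c < l k))
        + \sum_(k < N) \sum_(c < N) ((c < k) && (c < l k)).
  rewrite -big_split /=; apply: eq_bigr => k _.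
  rewrite -big_split /=.
  transitivity (\sum_(c < N) ((0 <= c) && (c < l k))); first by rewrite ord_count // subn0.
  apply: eq_bigr => c _.
  case: (leqP k c) => h1; case: (ltnP c (l k)) => h2 //=.
rewrite E1.
have E2 : \sum_(k < N) \sum_(c < N) ((k <= c) && (c < l k)) = \sum_(k < d) (l k - k).
  transitivity (\sum_(k < N) (l k - k)); first by apply: eq_bigr => k _; rewrite ord_count.
  apply: (@sum_trunc N d (fun k => l k - k)) => // k hk.
  by have := L1 k; rewrite ltnNge hk /= => /esym/negbT; rewrite -leqNgt; lia.
have E3 : \sum_(k < N) \sum_(c < N) ((c < k) && (c < l k))
    = \sum_(c < d) (yconj s c - c.+1).
  rewrite exchange_big /=.
  transitivity (\sum_(c < N) (yconj s c - c.+1)).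
    apply: eq_bigr => c _; rewrite -(@ord_count c.+1 (yconj s c) N) ?(leq_trans (count_size _ _) hrN) //.
    by apply: eq_bigr => k _; rewrite LY.
  apply: (@sum_trunc N d (fun c => yconj s c - c.+1)) => // c hc.
  apply/eqP; rewrite subn_eq0 leqNgt; apply/negP => h.
  have : c < l c.+1 by rewrite -LY.
  have := mono (leqnSn c); have := L1 c; rewrite ltnNge hc /=; lia.
rewrite E2 E3 -big_split /=; apply: eq_bigr => i _.
have := L1 i; rewrite ltn_ord /frob_p /frob_q; lia.
Qed.

End Z.


Section Sums.
Import GRing.Theory.
Variable K : comNzRingType.
Variable m : nat -> nat -> K.
Variable s : seq nat.
Hypothesis Ys : is_young s.
Local Notation l := (nth 0 s).
Local Notation d := (frob_d s).
Local Notation r := (size s).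
Local Notation F nu := (Fdet m (frob_d nu) (frob_p nu) (frob_q nu)).

Let NI := young_NI Ys.
Let mono := NI_mono NI.
Let L1 : forall k, (k < d) = (k < l k) := frob_dP NI.
Let LY : forall j k, (k < yconj s j) = (j < l k) := yconjP NI.

Lemma partA :
  (\sum_(i < r.+1 | valid_row s i && (i < d)%N) F (incr_nth s i)
   = \sum_(i < d) Fdet m d (fun k => (frob_p s k + (k == i))%N) (frob_q s))%R.
Proof.
have hd : d <= r.+1 by apply: leq_trans (d_size Ys) (leqnSn _).
rewrite (big_ord_widen r.+1 (fun i => Fdet m d (fun k => (frob_p s k + (k == i))%N) (frob_q s)) hd).
rewrite [RHS](bigID (fun i : 'I_r.+1 => valid_row s i)) /=.
rewrite [X in (_ = _ + X)%R]big1 ?GRing.addr0; last first.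
  move=> i /andP [hi hv].
  have hi0 : 0 < i by move: hv; rewrite /valid_row; case: (nat_of_ord i).
  apply: (@Fdet_row0 _ m d _ _ i.-1 i); try lia.
  rewrite (_ : (i.-1 == i) = false); last lia.
  rewrite eqxx row_invalid //; lia.
apply: eq_big => [i|i /andP [hv hi]]; first by rewrite andbC.
rewrite (row_d Ys hi hv); apply: Fdet_ext => k hk.
  exact: row_p.
exact: row_q.
Qed.

Definition Gj j :=
  if j < d then Fdet m d (frob_p s) (fun k => (frob_q s k + (k == j))%N)
  else Fdet m d.+1 (fun k => if (k < d)%N then frob_p s k else 0%N)
              (fun k => if (k < d)%N then frob_q s k else 0%N).

Lemma G_val i : d <= i -> i <= r -> valid_row s i -> F (incr_nth s i) = Gj (l i).
Proof.
move=> hi hir hv; rewrite /Gj.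
case: (ltnP (l i) d) => hl.
  rewrite (col_d Ys hi hir hv hl); apply: Fdet_ext => k hk.
    exact: col_p.
  exact: col_q.
have hl' : l i = d by apply/eqP; rewrite eqn_leq hl l_gt.
rewrite (diag_d Ys hi hir hv hl'); apply: Fdet_ext => k hk.
  exact: diag_p.
exact: diag_q.
Qed.

Lemma partB :
  (\sum_(i < r.+1 | valid_row s i && ~~ (i < d)%N) F (incr_nth s i)
   = \sum_(j < d.+1) Gj j)%R.
Proof.
transitivity (\sum_(i < r.+1 | valid_row s i && ~~ (i < d)%N)
                \sum_(j < d.+1) (if l i == j then F (incr_nth s i) else 0))%R.
  apply: eq_bigr => i /andP [hv]; rewrite -leqNgt => hi.
  have hl : l i < d.+1 by rewrite ltnS l_gt.
  rewrite (bigD1 (Ordinal hl)) //= eqxx big1 ?GRing.addr0 // => j hj.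
  rewrite (_ : (l i == j) = false) //; apply/negbTE; apply: contra hj => /eqP E.
  by apply/eqP; apply: val_inj.
rewrite exchange_big /=; apply: eq_bigr => j _.
set i0 := yconj s j.
have hi0 : i0 < r.+1 by rewrite ltnS /i0 count_size.
have U : forall i, valid_row s i -> l i = j -> i = i0.
  by move=> i hv E; rewrite /i0 -E y_valid.
case Hc : [&& valid_row s i0, d <= i0 & l i0 == j].
  move/and3P: Hc => [hv hdi /eqP hl].
  rewrite (bigD1 (Ordinal hi0)) /=; last by rewrite hv -leqNgt hdi.
  rewrite hl eqxx big1 ?GRing.addr0; last first.
    move=> i /andP [/andP [hv' _] hne].
    case: eqP => // E; exfalso; move: hne; rewrite -val_eqE /= (U _ hv' E) eqxx //.
  by rewrite G_val ?hl // -ltnS.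
rewrite big1; last first.
  move=> i /andP [hv hdi]; case: eqP => // E.
  have Ei := U _ hv E; move: Hc; rewrite -Ei hv E eqxx andbT.
  by rewrite -leqNgt in hdi; rewrite hdi.
rewrite /Gj; case: (ltnP j d) => hj.
  apply/esym; apply: col_zero => //.
  apply/negP => /eqP E; move: Hc; rewrite /i0 E eqxx andbT.
  have hv : valid_row s (yconj s j).
    rewrite /valid_row; have := y_ge Ys hj => hy.
    apply/orP; right.
    have h1 : l (yconj s j) <= j by rewrite leqNgt -LY ltnn.
    have h2 : j < l (yconj s j).-1 by rewrite -LY; lia.
    lia.
  by rewrite hv (y_ge Ys hj).
have Ej : (j : nat) = d by have := ltn_ord j; lia.
apply/esym; apply: diag_zero => //.
by move: Hc; rewrite /i0 Ej => ->.
Qed.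

End Sums.

Unset Implicit Arguments.
Import Order.TTheory GRing.Theory Num.Theory.
Local Open Scope ring_scope.

Theorem theorem8p1 (R : realType) (t : R[i]) (m : nat -> nat -> R[i])
  (ht : forall k : nat, t != - k%:R)
  (hrec : forall p q : nat,
     m p.+1 q + m p q.+1 - (p + q + 1)%:R * m p q = m p 0%N * m 0%N q)
  (h00 : m 0%N 0%N = t)
  (lam : seq nat) (hlam : is_young lam)
  (succ : seq (seq nat)) (hsuniq : uniq succ)
  (hsucc : forall nu : seq nat, nu \in succ <-> adds_box nu lam) :
  phi t m lam = \sum_(nu <- succ) phi t m nu.
Proof.
set n := ysize lam.
set P := \prod_(k < n) (t + k%:R).
have Ephi : forall nu, phi t m nu =
   Fdet m (frob_d nu) (frob_p nu) (frob_q nu) / \prod_(k < ysize nu) (t + k%:R) by [].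
rewrite (sum_succ _ _ hlam hsuniq hsucc).
have E1 : \sum_(i < (size lam).+1 | valid_row lam i) phi t m (incr_nth lam i)
   = (\sum_(i < (size lam).+1 | valid_row lam i)
        Fdet m (frob_d (incr_nth lam i)) (frob_p (incr_nth lam i)) (frob_q (incr_nth lam i)))
     / (P * (t + n%:R)).
  rewrite mulr_suml; apply: eq_bigr => i hv.
  rewrite Ephi /ysize sumn_incr; last by rewrite -ltnS.
  rewrite big_ord_recr; congr (_ / (_ * _)).
rewrite E1 (bigID (fun i : 'I_(size lam).+1 => (i < frob_d lam)%N)).
rewrite partA // partB // big_ord_recr.
have -> : \sum_(i < frob_d lam) Gj m lam (widen_ord (leqnSn (frob_d lam)) i)
   = \sum_(j < frob_d lam) Fdet m (frob_d lam) (frob_p lam)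
        (fun k => (frob_q lam k + (k == j))%N).
  by apply: eq_bigr => j _; rewrite /Gj (_ : (widen_ord _ j : nat) = j) // ltn_ord.
rewrite /Gj (_ : (ord_max : 'I_(frob_d lam).+1) = frob_d lam :> nat) // ltnn.
have HALG := ALG hrec (frob_d lam) (frob_p lam) (frob_q lam); rewrite -addrA in HALG.
transitivity (((m 0%N 0%N + (\sum_(i < frob_d lam) (frob_p lam i + frob_q lam i + 1))%N%:R)
   * Fdet m (frob_d lam) (frob_p lam) (frob_q lam)) / (P * (t + n%:R))).
  2: by congr (_ / _); rewrite -HALG.
rewrite h00 -(size_frob hlam) -/n.
have hn : t + n%:R != 0.
  by rewrite addr_eq0; apply: ht.
rewrite Ephi -/n -/P invfM.
set D := Fdet _ _ _ _.
by rewrite (_ : (sumn lam)%:R = n%:R) // [_ * D]mulrC -mulrA [(t + n%:R) * _]mulrCA mulfV // mulr1.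
Qed.
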